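(* Let $d\ge1$ and let $\varphi^1,\dots,\varphi^{d+1}\in\mathbb{R}^d$ satisfy $\|\varphi^j\|_2=1$ for all $j$ (Euclidean norm) and $\langle\varphi^i,\varphi^j\rangle=-\frac1d$ for all $1\le i\neq j\le d+1$. Let $B_2=\{x\in\mathbb{R}^d:\|x\|_2\le1\}$ and $B^o_2(x)=\{y:\|y-x\|_2<1\}$. Then there exists $a>0$ such that $$B_2\subset\bigcup_{j=1}^{d+1}B^o_2(a\varphi^j).$$ *)

(* Defs.v *)
From HB Require Import structures.
From mathcomp Require Import all_boot all_order all_algebra.
From mathcomp Require Import reals.
Set Implicit Arguments. Unset Strict Implicit. Unset Printing Implicit Defensive.
Import Order.TTheory GRing.Theory Num.Theory.
Local Open Scope ring_scope.

Definition dotv (R : realType) (d : nat) (x y : 'rV[R]_d) : R :=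
  \sum_(i < d) x 0 i * y 0 i.

Definition norm2 (R : realType) (d : nat) (x : 'rV[R]_d) : R :=
  Num.sqrt (dotv x x).

(* Main.v *)
Require Import Defs.
From HB Require Import structures.
From mathcomp Require Import all_boot all_order all_algebra.
From mathcomp Require Import reals.
From mathcomp Require Import ring lra.
Import Order.TTheory GRing.Theory Num.Theory.
Local Open Scope ring_scope.

Section Dot.
Variables (R : realType) (d : nat).
Implicit Types (x y z : 'rV[R]_d).

Lemma dotvC x y : dotv x y = dotv y x.
Proof. by apply: eq_bigr => i _; rewrite mulrC. Qed.

Lemma dotvDl x y z : dotv (x + y) z = dotv x z + dotv y z.
Proof. by rewrite /dotv -big_split; apply: eq_bigr => i _; rewrite mxE mulrDl. Qed.

Lemma dotvZl a x z : dotv (a *: x) z = a * dotv x z.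
Proof. by rewrite /dotv mulr_sumr; apply: eq_bigr => i _; rewrite mxE mulrA. Qed.

Lemma dotv0l z : dotv 0 z = 0.
Proof. by rewrite /dotv big1 // => i _; rewrite mxE mul0r. Qed.

Lemma dotvNl x z : dotv (- x) z = - dotv x z.
Proof. by rewrite -scaleN1r dotvZl mulN1r. Qed.

Lemma dotvBl x y z : dotv (x - y) z = dotv x z - dotv y z.
Proof. by rewrite dotvDl dotvNl. Qed.

Lemma dotvDr x y z : dotv z (x + y) = dotv z x + dotv z y.
Proof. by rewrite !(dotvC z) dotvDl. Qed.

Lemma dotvZr a x z : dotv z (a *: x) = a * dotv z x.
Proof. by rewrite !(dotvC z) dotvZl. Qed.

Lemma dotvBr x y z : dotv z (x - y) = dotv z x - dotv z y.
Proof. by rewrite !(dotvC z) dotvBl. Qed.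

Lemma dotv_suml (I : finType) (F : I -> 'rV[R]_d) z :
  dotv (\sum_i F i) z = \sum_i dotv (F i) z.
Proof. exact: (big_morph (fun v => dotv v z) (fun u v => dotvDl u v z) (dotv0l z)). Qed.

Lemma dotv_ge0 x : 0 <= dotv x x.
Proof. by apply: sumr_ge0 => i _; rewrite -expr2 sqr_ge0. Qed.

Lemma dotv_eq0 x : dotv x x = 0 -> x = 0.
Proof.
move=> h; apply/rowP => i; rewrite mxE.
have h' : \sum_(j < d) x 0 j ^+ 2 = 0.
  by rewrite -[RHS]h /dotv; apply: eq_bigr => j _; rewrite expr2.
have := psumr_eq0P (P := predT) (fun j _ => sqr_ge0 (x 0 j)) h' (erefl true : predT i).
by move=> /eqP; rewrite sqrf_eq0 => /eqP.
Qed.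

End Dot.

Section Main.
Variables (R : realType) (d : nat) (hd : (1 <= d)%N) (phi : 'I_d.+1 -> 'rV[R]_d).
Hypothesis hunit : forall j, norm2 (phi j) = 1.
Hypothesis hdot : forall i j : 'I_d.+1, i != j -> dotv (phi i) (phi j) = - (d%:R)^-1.

Let k : R := (d%:R)^-1.
Let c : R := d%:R / (d%:R + 1).

Lemma dn0 : (d%:R : R) != 0.
Proof. by rewrite pnatr_eq0 -lt0n. Qed.

Lemma dp1n0 : (d%:R + 1 : R) != 0.
Proof. by rewrite gt_eqF // addr_gt0 // ltr0n. Qed.

Lemma hone j : dotv (phi j) (phi j) = 1.
Proof.
have := hunit j; rewrite /norm2 => h.
by rewrite -(sqr_sqrtr (@dotv_ge0 _ _ (phi j))) h expr1n.
Qed.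

Lemma gram i j : dotv (phi i) (phi j) = (i == j)%:R * (1 + k) - k.
Proof.
case: eqVneq => [->|ne]; first by rewrite hone mul1r addrK.
by rewrite hdot // mul0r sub0r.
Qed.

Lemma rowsum i : \sum_j dotv (phi i) (phi j) = 0.
Proof.
under eq_bigr do rewrite gram.
rewrite sumrB sumr_const card_ord -mulr_suml (bigD1 i) //= eqxx big1.
  rewrite addr0 mul1r /k; apply/eqP; rewrite subr_eq0; apply/eqP.
  rewrite -mulr_natr; field; exact: dn0.
by move=> j /negbTE; rewrite eq_sym => ->.
Qed.

Lemma sum0 : \sum_j phi j = 0.
Proof.
apply: dotv_eq0; rewrite dotv_suml big1 // => i _.
rewrite dotvC dotv_suml -[RHS](rowsum i); apply: eq_bigr => j _; exact: dotvC.
Qed.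

Lemma ortho y : (forall j, dotv y (phi j) = 0) -> y = 0.
Proof.
move=> hy.
pose w := widen_ord (leqnSn d).
pose A : 'M[R]_d := \matrix_(i, l) phi (w i) 0 l.
pose H : 'M[R]_d := \matrix_(i, l) (c * ((i == l)%:R + 1)).
have AAt i l : (A *m A^T) i l = dotv (phi (w i)) (phi (w l)).
  by rewrite !mxE; apply: eq_bigr => m _; rewrite !mxE.
have rs i : \sum_j dotv (phi (w i)) (phi (w j)) = k.
  have := rowsum (w i); rewrite big_ord_recr /= hdot.
    by move/eqP; rewrite subr_eq0 => /eqP ->.
  apply/negP => /eqP/(congr1 val) /= E; move: (ltn_ord i); by rewrite E ltnn.
have GH : (A *m A^T) *m H = 1%:M.
  apply/matrixP => i l; rewrite mxE [RHS]mxE.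
  under eq_bigr do rewrite AAt mxE mulrCA mulrDr mulr1.
  rewrite -mulr_sumr big_split /= rs (bigD1 l) //= eqxx mulr1 big1.
    rewrite addr0 gram.
    have -> : (w i == w l) = (i == l) by [].
    rewrite /c /k; field; rewrite ?dn0 ?dp1n0 //.
  by move=> j /negbTE ->; rewrite mulr0.
have Hinv : (A^T *m H) *m A = 1%:M by apply: mulmx1C; rewrite mulmxA.
have yA : y *m A^T = 0.
  apply/rowP => i; rewrite !mxE -[RHS](hy (w i)); apply: eq_bigr => m _.
  by rewrite !mxE.
by rewrite -(mulmx1 y) -Hinv !mulmxA yA !mul0mx.
Qed.

End Main.

Theorem proposition3p4 (R : realType) (d : nat) (hd : (1 <= d)%N)
  (phi : 'I_d.+1 -> 'rV[R]_d)
  (hunit : forall j, norm2 (phi j) = 1)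
  (hdot : forall i j : 'I_d.+1, i != j -> dotv (phi i) (phi j) = - (d%:R)^-1) :
  exists a : R, 0 < a /\
    forall x : 'rV[R]_d, norm2 x <= 1 ->
      exists j : 'I_d.+1, norm2 (x - a *: phi j) < 1.
Proof.
have gr := @gram R d phi hunit hdot.
have orth := @ortho R d hd phi hunit hdot.
have s0 := @sum0 R d hd phi hunit hdot.
have dn := @dn0 R d hd.
have dp := @dp1n0 R d.
have dge1 : (1 : R) <= d%:R by rewrite ler1n.
pose D : R := d%:R ^+ 3.
have D1 : 1 <= D by rewrite /D exprn_ege1.
pose a := (D + 1)^-1.
have Dp : D + 1 != 0 by rewrite gt_eqF //; lra.
have a0 : 0 < a by rewrite /a invr_gt0; lra.
have aD : a * (D + 1) = 1 by rewrite /a mulVf.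
exists a; split => // x hx.
have hs : dotv x x <= 1.
  by move: hx; rewrite /norm2 -{1}sqrtr1 ler_sqrt // ler01.
pose t j := dotv x (phi j).
have St : \sum_j t j = 0.
  rewrite /t; under eq_bigr do rewrite dotvC.
  by rewrite -dotv_suml s0 dotv0l.
pose c := (d%:R : R) / (d%:R + 1).
have Gt l : \sum_j t j * dotv (phi j) (phi l) = t l * (1 + (d%:R)^-1).
  under eq_bigr do rewrite gr mulrBr mulrA.
  rewrite sumrB -!mulr_suml St mul0r subr0 (bigD1 l) //= eqxx mulr1 big1 ?addr0 //.
  by move=> j /negbTE ->; rewrite mulr0.
have xeq : x = c *: \sum_j t j *: phi j.
  apply/eqP; rewrite -subr_eq0; apply/eqP; apply: orth => l.
  rewrite dotvBl dotvZl dotv_suml.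
  under eq_bigr do rewrite dotvZl.
  rewrite Gt /c -/(t l); field; by rewrite dn dp.
have sx : dotv x x = c * \sum_j t j ^+ 2.
  rewrite {1}xeq dotvZl dotv_suml; congr (_ * _); apply: eq_bigr => j _.
  by rewrite dotvZl dotvC expr2.
have [j _ Hj] := @arg_maxP _ _ _ ord0 xpredT t erefl.
set m := t j in Hj *.
have Sm : \sum_i (m - t i) = m * (d%:R + 1).
  by rewrite sumrB St subr0 sumr_const card_ord mulrSr mulrDr mulr1 mulr_natr.
have Sge : 0 <= \sum_i (m - t i).
  by apply: sumr_ge0 => i _; rewrite subr_ge0; exact: Hj.
have m0 : 0 <= m by move: Sge; rewrite Sm => h; nra.
have tlo i : - (d%:R * m) <= t i.
  have : m - t i <= \sum_l (m - t l).
    rewrite (bigD1 i) //= lerDl sumr_ge0 // => l _; by rewrite subr_ge0; exact: Hj.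
  rewrite Sm => h; nra.
have tsq i : t i ^+ 2 <= (d%:R * m) ^+ 2.
  have hi : t i <= m := Hj i erefl.
  have h1 : 0 <= d%:R * m - t i by nra.
  have h2 : 0 <= d%:R * m + t i by have := tlo i; lra.
  nra.
have c0 : 0 <= c by rewrite /c divr_ge0 // addr_ge0.
have sD : dotv x x <= D * m ^+ 2.
  have h : \sum_j t j ^+ 2 <= (d%:R * m) ^+ 2 * (d%:R + 1).
    apply: (le_trans (ler_sum _ (fun i _ => tsq i))).
    by rewrite sumr_const card_ord mulrSr mulrDr mulr1 mulr_natr.
  rewrite sx; apply: (le_trans (ler_wpM2l c0 h)).
  suff -> : c * ((d%:R * m) ^+ 2 * (d%:R + 1)) = D * m ^+ 2 by [].
  rewrite /c /D; field; exact: dp.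
exists j.
rewrite /norm2 -sqrtr1 ltr_sqrt ?ltr01 //.
rewrite dotvBl !dotvBr !dotvZl !dotvZr (@hone R d phi hunit j) (@dotvC _ _ (phi j) x) -/(t j) -/m.
have a1 : a < 1 by nra.
have Da2 : D * a ^+ 2 = a - a ^+ 2.
  transitivity (a * (a * (D + 1)) - a ^+ 2); first ring.
  by rewrite aD mulr1.
case: (lerP m (a / 2)) => hm.
  have m2 : m ^+ 2 <= a ^+ 2 / 4 by nra.
  have : D * m ^+ 2 <= D * (a ^+ 2 / 4) by nra.
  have : 0 <= a * m by nra.
  nra.
have : a ^+ 2 < 2 * a * m by nra.
nra.
Qed.
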